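(* Let $m\geq 1$ and $n\geq 3$ be integers. For all vertices $i,j$ of the oriented Dutch windmill graph $D^m_n$, the number of walks in $D^m_n$ of length $2n-1$ from $i$ to $j$ is exactly $m$ times the number of walks of length $n-1$ from $i$ to $j$.
   Context: For integers $m\geq 1$, $n\geq 3$, the oriented Dutch windmill graph $D^m_n$ is the directed graph with vertex set $V=\{1,2,\ldots,m(n-1)+1\}$ whose directed edges $(a,b)$ are exactly: $(1,(k-1)(n-1)+2)$ for $k\in\{1,\ldots,m\}$; $((k-1)(n-1)+i,(k-1)(n-1)+i+1)$ for $k\in\{1,\ldots,m\}$ and $i\in\{2,\ldots,n-1\}$; and $((k-1)(n-1)+n,1)$ for $k\in\{1,\ldots,m\}$. A walk is a sequence of vertices $\langle v_1,\ldots,v_r\rangle$ in which each $(v_t,v_{t+1})$ is an edge; its length is $r-1$; walks are distinct when they are distinct sequences. *)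

(* Defs.v *)
From mathcomp Require Import all_boot.
Unset Printing Implicit Defensive.

Definition dw_nverts (m n : nat) : nat := m * (n - 1) + 1.

Definition dw_vertex (m n v : nat) : bool := (1 <= v) && (v <= dw_nverts m n).

Definition dw_edge (m n : nat) (a b : nat) : bool :=
  has (fun k =>
     [|| (a == 1) && (b == (k - 1) * (n - 1) + 2),
         has (fun i => (a == (k - 1) * (n - 1) + i) && (b == (k - 1) * (n - 1) + i + 1))
             (iota 2 (n - 2))
       | (a == (k - 1) * (n - 1) + n) && (b == 1)]) (iota 1 m).

(* We enumerate candidate sequences as
   (L+1)-tuples of 'I_(N+1), N = number of vertices, so all labels 1..N fit. *)
Definition dw_walk (m n L i j : nat) (w : L.+1.-tuple 'I_(dw_nverts m n).+1) : bool :=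
  all (fun v : 'I_(dw_nverts m n).+1 => dw_vertex m n v) w &&
  (nat_of_ord (thead w) == i) && (nat_of_ord (last (thead w) w) == j) &&
  path (fun a b : 'I_(dw_nverts m n).+1 => dw_edge m n a b) (thead w) (behead w).

Definition dw_nwalks (m n L i j : nat) : nat :=
  #|[pred w : L.+1.-tuple 'I_(dw_nverts m n).+1 | @dw_walk m n L i j w]|.

(* Main.v *)
Require Import Defs.
From mathcomp Require Import all_boot.
From mathcomp Require Import zify.

Lemma card_sum (T : finType) (P : pred T) :
  #|[pred x | P x]| = \sum_(x : T) (P x : nat).
Proof.
rewrite -sum1_card big_mkcond /=; apply: eq_bigr => x _.
by rewrite inE; case: (P x).
Qed.

Lemma big_tuple_cons (T : finType) (L : nat) (F : L.+2.-tuple T -> nat) :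
  \sum_(w : L.+2.-tuple T) F w =
  \sum_(x : T) \sum_(w : L.+1.-tuple T) F [tuple of x :: w].
Proof.
rewrite pair_bigA /=.
rewrite (reindex (fun p : T * L.+1.-tuple T => [tuple of p.1 :: p.2])) //=.
exists (fun w : L.+2.-tuple T => (thead w, [tuple of behead w])).
  move=> [x w] _ /=; rewrite theadE; congr pair; exact: val_inj.
move=> w _ /=; rewrite [RHS]tuple_eta; exact: val_inj.
Qed.

Lemma last_nonempty (T : Type) (a b : T) (s : seq T) : 0 < size s -> last a s = last b s.
Proof. by case: s. Qed.

Section Rec.
Variables (m n : nat).
Local Notation K := (dw_nverts m n).+1.

Lemma walk_cons L i j (x : 'I_K) (w : L.+1.-tuple 'I_K) :
  dw_walk m n L.+1 i j [tuple of x :: w] =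
  [&& dw_vertex m n x, nat_of_ord x == i, dw_edge m n x (thead w) &
      dw_walk m n L (thead w) j w].
Proof.
rewrite /dw_walk theadE /=.
have -> : last x w = last (thead w) w.
  by apply: last_nonempty; rewrite size_tuple.
have E : (w : seq _) = thead w :: behead w by rewrite {1}[w]tuple_eta.
rewrite E /= eqxx andbT.
case: (dw_vertex m n x); case: (x == i :> nat); case: (dw_edge m n x _);
  case: (dw_vertex m n (thead w)); rewrite /= ?andbF ?andbT //.
Qed.

Lemma nwalks_rec L i j : i < K ->
  dw_nwalks m n L.+1 i j =
  \sum_(0 <= y < K | dw_edge m n i y) (dw_vertex m n i : nat) * dw_nwalks m n L y j.
Proof.
move=> iK.
rewrite /dw_nwalks card_sum big_tuple_cons.
under eq_bigr => x _ do under eq_bigr => w _ do rewrite walk_cons.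
rewrite (bigD1 (Ordinal iK)) //= [X in _ + X]big1 ?addn0; last first.
  move=> x Hx; apply: big1 => w _.
  have -> : (nat_of_ord x == i) = false.
    by apply/negbTE; apply: contra Hx => /eqP H; apply/eqP; apply: val_inj.
  by rewrite andbF.
rewrite eqxx big_mkord big_mkcond /=.
under [RHS]eq_bigr => y _ do rewrite card_sum.
have -> : \sum_(w : L.+1.-tuple 'I_K)
   ([&& dw_vertex m n i, dw_edge m n i (thead w) & dw_walk m n L (thead w) j w] : nat)
  = \sum_(w : L.+1.-tuple 'I_K) \sum_(y : 'I_K)
   ([&& dw_vertex m n i, dw_edge m n i y & dw_walk m n L y j w] : nat).
  apply: eq_bigr => w _.
  rewrite (bigD1 (thead w)) //= [X in _ + X]big1 ?addn0 // => y Hy.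
  rewrite /dw_walk.
  have -> : (nat_of_ord (thead w) == y) = false.
    by apply/negbTE; apply: contra Hy => /eqP H; apply/eqP; apply: val_inj.
  by rewrite !andbF.
rewrite exchange_big /= [RHS]big_mkcond /=; apply: eq_bigr => y _.
case: (dw_edge m n i y); case: (dw_vertex m n i) => /=;
  rewrite ?mul1n ?mul0n //; by rewrite big1.
Qed.
End Rec.

Lemma inj_dec d c c' x x' : 0 < d -> x < d -> x' < d ->
  c * d + x = c' * d + x' -> c = c' /\ x = x'.
Proof.
move=> d0 xd x'd E.
have E1 := congr1 (divn^~ d) E; have E2 := congr1 (modn^~ d) E; move: E1 E2 => /=.
by rewrite !modnMDl !modn_small // !divnMDl // !divn_small // !addn0.
Qed.

Lemma cd_le c d m : c < m -> c * d + d <= m * d.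
Proof. by move=> cm; rewrite addnC -mulSn leq_mul2r cm orbT. Qed.

Section Edges.
Variables (m d : nat).
Hypothesis d2 : 2 <= d.

Lemma e1 y : dw_edge m d.+1 1 y = (y \in [seq (k - 1) * d + 2 | k <- iota 1 m]).
Proof.
rewrite /dw_edge subSS subn0.
apply/hasP/mapP.
- move=> [k Hk /or3P [/andP[_ /eqP ->] | /hasP[i] | /andP[/eqP Ha _]]].
  + by exists k.
  + rewrite mem_iota => Hi /andP[/eqP Ha _]; exfalso; nia.
  + exfalso; nia.
- by move=> [k Hk ->]; exists k; rewrite ?eqxx.
Qed.

Lemma e2 c p y : c < m -> 1 <= p -> p < d ->
  dw_edge m d.+1 (c * d + p + 1) y = (y == c * d + p + 2).
Proof.
move=> cm p1 pd.
rewrite /dw_edge subSS subn0.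
apply/hasP/eqP.
- move=> [k Hk /or3P [/andP[/eqP Ha _] | /hasP[i] | /andP[/eqP Ha _]]].
  + nia.
  + rewrite mem_iota => Hi /andP[/eqP Ha /eqP ->].
    have [Hc Hp] : c = k - 1 /\ p - 1 = i - 2.
      apply: (@inj_dec d); nia.
    rewrite -Hc; nia.
  + move: Hk; rewrite mem_iota => Hk.
    have [_ Hp] : c = k /\ p = 0.
      apply: (@inj_dec d); try nia.
    nia.
- move=> ->; exists c.+1; first by rewrite mem_iota; nia.
  apply/or3P; apply: Or32; apply/hasP; exists p.+1; first by rewrite mem_iota; nia.
  rewrite subn1 /=; apply/andP; split; apply/eqP; nia.
Qed.

Lemma e3 c y : c < m -> dw_edge m d.+1 (c * d + d.+1) y = (y == 1).
Proof.
move=> cm.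
rewrite /dw_edge subSS subn0.
apply/hasP/eqP.
- move=> [k Hk /or3P [/andP[/eqP Ha _] | /hasP[i] | /andP[/eqP Ha /eqP ->]]] //.
  + nia.
  + rewrite mem_iota => Hi /andP[/eqP Ha _].
    have [_ Hp] : c = k - 1 /\ d - 1 = i - 2.
      apply: (@inj_dec d); nia.
    nia.
- move=> ->; exists c.+1; first by rewrite mem_iota; nia.
  apply/or3P; apply: Or33; rewrite subn1 /= !eqxx; done.
Qed.
End Edges.

Lemma sumS K (S : seq nat) (F : nat -> nat) : uniq S -> all (fun y => y < K) S ->
  \sum_(0 <= y < K | y \in S) F y = \sum_(y <- S) F y.
Proof.
move=> uS aS; rewrite -big_filter; apply: perm_big; apply: uniq_perm.
- by rewrite filter_uniq // iota_uniq.
- exact: uS.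
- move=> y; rewrite mem_filter mem_iota add0n /=.
  case yS: (y \in S) => /= //; rewrite subn0; by move/allP: aS => /(_ y yS) ->.
Qed.

Section Count.
Variables (m d j : nat).
Hypothesis d2 : 2 <= d.
Local Notation N L x := (dw_nwalks m d.+1 L x j).

Lemma nv : dw_nverts m d.+1 = m * d + 1.
Proof. by rewrite /dw_nverts subn1. Qed.

Lemma S1 L c p : c < m -> 1 <= p -> p < d ->
  N L.+1 (c * d + p + 1) = N L (c * d + p + 2).
Proof.
move=> cm p1 pd; have H := @cd_le c d m cm.
rewrite nwalks_rec; last by rewrite nv; lia.
rewrite (eq_bigl (fun y => y \in [:: c * d + p + 2])); last first.
  by move=> y; rewrite e2 // inE.
rewrite nv sumS //; last by rewrite /= andbT; lia.
rewrite big_seq1 /dw_vertex nv.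
have -> : (1 <= c * d + p + 1) && (c * d + p + 1 <= m * d + 1) by apply/andP; lia.
by rewrite mul1n.
Qed.

Lemma S2 L c : c < m -> N L.+1 (c * d + d.+1) = N L 1.
Proof.
move=> cm; have H := @cd_le c d m cm.
rewrite nwalks_rec; last by rewrite nv; lia.
rewrite (eq_bigl (fun y => y \in [:: 1])); last first.
  by move=> y; rewrite e3 // inE.
rewrite nv sumS //; last by rewrite /= andbT; lia.
rewrite big_seq1 /dw_vertex nv.
have -> : (1 <= c * d + d.+1) && (c * d + d.+1 <= m * d + 1) by apply/andP; lia.
by rewrite mul1n.
Qed.

Lemma S3 L : N L.+1 1 = \sum_(k <- iota 1 m) N L ((k - 1) * d + 2).
Proof.
rewrite nwalks_rec; last by rewrite nv; lia.
rewrite (eq_bigl (fun y => y \in [seq (k - 1) * d + 2 | k <- iota 1 m])); last first.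
  by move=> y; rewrite e1.
rewrite nv sumS.
- rewrite big_map /dw_vertex nv; apply: eq_bigr => k _.
  have -> : (1 <= 1) && (1 <= m * d + 1) by apply/andP; lia.
  by rewrite mul1n.
- rewrite map_inj_in_uniq ?iota_uniq // => a b; rewrite !mem_iota => Ha Hb /eqP.
  rewrite eqn_add2r eqn_mul2r => /orP [/eqP|/eqP]; lia.
- apply/allP => y /mapP [k]; rewrite mem_iota => Hk ->.
  have : k - 1 < m by lia.
  move/(@cd_le (k-1) d m); lia.
Qed.

Lemma B L e : forall p c, c < m -> 1 <= p -> p + e = d ->
  N (L + e.+1) (c * d + p + 1) = N L 1.
Proof.
elim: e => [|e IH] p c cm p1 pe.
- rewrite addn0 in pe; rewrite pe addn1 -addnA addn1; exact: S2.
- rewrite addnS S1 //; last by lia.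
  have -> : c * d + p + 2 = c * d + p.+1 + 1 by lia.
  by apply: IH => //; lia.
Qed.

Lemma A L : N (L + d.+1) 1 = m * N L 1.
Proof.
rewrite addnS S3.
rewrite (eq_big_seq (fun _ => N L 1)); last first.
  move=> k; rewrite mem_iota => Hk.
  have -> : L + d = L + (d - 1).+1 by lia.
  have -> : (k - 1) * d + 2 = (k - 1) * d + 1 + 1 by lia.
  apply: B; lia.
by rewrite big_const_seq count_predT size_iota iter_addn_0 mulnC.
Qed.
End Count.

Theorem proposition2p7 (m n i j : nat) :
  1 <= m -> 3 <= n -> dw_vertex m n i -> dw_vertex m n j ->
  dw_nwalks m n (2 * n - 1) i j = m * dw_nwalks m n (n - 1) i j.
Proof.
case: n => [|d] // m1 Hn Hi _.
have d2 : 2 <= d by lia.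
have -> : 2 * d.+1 - 1 = d + d.+1 by lia.
have -> : d.+1 - 1 = d by lia.
move: Hi; rewrite /dw_vertex nv => /andP [Hi1 Hi2].
have [->|i2] := eqVneq i 1; first exact: A.
have d0 : 0 < d by lia.
set c := (i - 2) %/ d; set r := (i - 2) %% d.
have rd : r < d by rewrite /r ltn_pmod.
have cm : c < m by rewrite /c ltn_divLR //; lia.
have Ei : i = c * d + r.+1 + 1.
  have i2' : 1 < i by rewrite ltn_neqAle eq_sym i2 Hi1.
  have := divn_eq (i - 2) d; rewrite -/c -/r; lia.
rewrite Ei.
have -> : d + d.+1 = (d + r.+1) + (d - r.+1).+1 by lia.
rewrite B //; try lia.
have -> : d + r.+1 = r + d.+1 by lia.
rewrite A //.
have E : d = r + (d - r.+1).+1 by lia.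
have -> : dw_nwalks m d.+1 d (c * d + r.+1 + 1) j = dw_nwalks m d.+1 (r + (d - r.+1).+1) (c * d + r.+1 + 1) j by rewrite -E.
rewrite B //; lia.
Qed.
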